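(* Let $a_0=1$, let $a_1,a_2,\ldots>0$ and $b_1,b_2,\ldots\in\mathbb{R}$, and let $A$ be the associated semi-infinite Jacobi matrix. For $T\in\mathbb{N}$ let $C_T$ be the $T\times T$ matrix with entries $\{C_T\}_{ij}=\int_{\mathbb{R}}\mathcal{T}_i(\lambda)\mathcal{T}_j(\lambda)\,d\rho(\lambda)$, $i,j=1,\ldots,T$, where $\rho$ is any solution of the Hamburger moment problem with moments $s_k=(A^ke_1,e_1)$, and let $\gamma_T$ be the largest eigenvalue of $C_T$. If there exists a constant $M\in\mathbb{R}$ with $\gamma_T\leqslant M$ for all $T=1,2,\ldots$, then $A$ is in the limit point case, i.e. the moment problem associated with $\{s_k\}$ is determinate.
   Context: Here $e_1=(1,0,0,\ldots)$ and $A$ acts on finitely supported sequences by $(A\theta)_1=b_1\theta_1+a_1\theta_2$, $(A\theta)_n=a_n\theta_{n+1}+a_{n-1}\theta_{n-1}+b_n\theta_n$ for $n\ge2$. A solution of the moment problem is a Borel measure $\rho$ on $\mathbb{R}$ with $\int\lambda^k\,d\rho=s_k$ for all $k\ge0$; determinate means the solution is unique, which is equivalent to $A$ (on finitely supported sequences in $l_2$) having deficiency indices $(0,0)$ (limit point case). The polynomials $\mathcal{T}_k$ are defined by $\mathcal{T}_0=0$, $\mathcal{T}_1=1$, $\mathcal{T}_{t+1}(\lambda)+\mathcal{T}_{t-1}(\lambda)-\lambda\mathcal{T}_t(\lambda)=0$; $C_T$ does not depend on the choice of $\rho$. *)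

(* Defs.v *)
From HB Require Import structures.
From mathcomp Require Import all_boot all_order all_algebra.
From mathcomp Require Import all_classical all_reals all_analysis.
Set Implicit Arguments. Unset Strict Implicit. Unset Printing Implicit Defensive.
Import Order.TTheory GRing.Theory Num.Theory.
Local Open Scope classical_set_scope.
Local Open Scope ring_scope.

(* Sequences theta : nat -> R are indexed from 1 (the value at 0 is unused /
   taken to be 0). a n, b n for n >= 1 are the Jacobi parameters. *)

Definition jacobi_op {R : realType} (a b : nat -> R) (theta : nat -> R) : nat -> R :=
  fun n => match n with
  | 0 => 0
  | 1 => b 1 * theta 1 + a 1 * theta 2
  | n'.+1 => a n * theta n.+1 + a n' * theta n' + b n * theta n
  end.

Definition e1 {R : realType} : nat -> R := fun n => if n == 1%N then 1 else 0.

(* s_k = (A^k e_1, e_1) *)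
Definition moment {R : realType} (a b : nat -> R) (k : nat) : R :=
  iter k (jacobi_op a b) e1 1%N.

Definition moment_solution {R : realType} (s : nat -> R)
    (rho : {measure set R -> \bar R}) : Prop :=
  forall k : nat, rho.-integrable setT (fun x => (x ^+ k)%:E) /\
    (\int[rho]_(x in setT) (x ^+ k)%:E = (s k)%:E)%E.

Fixpoint Tpoly {R : realType} (k : nat) (l : R) : R :=
  match k with
  | 0 => 0
  | 1 => 1
  | (t.+1 as k').+1 => l * Tpoly k' l - Tpoly t l
  end.

Definition CT {R : realType} (rho : {measure set R -> \bar R}) (T : nat) : 'M[R]_T :=
  \matrix_(i < T, j < T) Rintegral rho setT (fun x => Tpoly i.+1 x * Tpoly j.+1 x).

Definition largest_eigenvalue {R : realType} {n : nat} (C : 'M[R]_n) (g : R) : Prop :=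
  eigenvalue C g /\ forall x, eigenvalue C x -> x <= g.

Definition determinate {R : realType} (s : nat -> R) : Prop :=
  forall rho1 rho2 : {measure set R -> \bar R},
    moment_solution s rho1 -> moment_solution s rho2 ->
    forall A : set R, measurable A -> rho1 A = rho2 A.

(* Main.v *)
Require Import Defs.
From HB Require Import structures.
From mathcomp Require Import all_boot all_order all_algebra.
From mathcomp Require Import all_classical all_reals all_analysis.
From mathcomp Require Import measurable_realfun.
From mathcomp Require Import ring lra.
Import Order.TTheory GRing.Theory Num.Theory.
Local Open Scope classical_set_scope.
Local Open Scope ring_scope.
Set Implicit Arguments. Unset Strict Implicit. Unset Printing Implicit Defensive.
Import numFieldNormedType.Exports.
Section LinAlg.
Variable R : realType.

Lemma cont_sum (n : nat) (I : Type) (r : seq I) (F : I -> 'rV[R]_n -> R) :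
  (forall i, continuous (F i)) -> continuous (fun v => \sum_(i <- r) F i v).
Proof.
move=> hF; elim: r => [|i r IH].
  under eq_fun do rewrite big_nil. exact: cst_continuous.
have -> : (fun v => \sum_(j <- i :: r) F j v) = (fun v => F i v + \sum_(j <- r) F j v).
  by apply: funext => v; rewrite big_cons.
move=> x; exact: (cvgD (hF i x) (IH x)).
Qed.

Definition bf n (C : 'M[R]_n) (u v : 'rV[R]_n) : R := (u *m C *m v^T) 0 0.

Lemma bfE n (C : 'M[R]_n) u v :
  bf C u v = \sum_j (\sum_i u 0 i * C i j) * v 0 j.
Proof.
rewrite /bf !mxE; apply: eq_bigr => j _; rewrite !mxE; congr (_ * _).
Qed.

Lemma coordc n (k : 'I_n) (y : 'rV[R]_n) : (fun v : 'rV[R]_n => v 0 k) @ y --> y 0 k.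
Proof. exact: (@coord_continuous R 1 n 0 k y). Qed.

Lemma bf_cont n (C : 'M[R]_n) : continuous (fun v => bf C v v).
Proof.
have -> : (fun v => bf C v v) = (fun v => \sum_(j <- index_enum 'I_n) ((\sum_(i <- index_enum 'I_n) v 0 i * C i j) * v 0 j)).
  by apply: funext => v; rewrite bfE.
apply: cont_sum => j x.
have h1 : continuous (fun v : 'rV[R]_n => \sum_(i <- index_enum 'I_n) v 0 i * C i j).
  apply: cont_sum => i y.
  exact: (cvgM (@coordc n i y) (cvg_cst (C i j))).
exact: (cvgM (h1 x) (@coordc n j x)).
Qed.

Lemma bf_sym n (C : 'M[R]_n) u v : bf C u v = bf C^T v u.
Proof.
rewrite /bf.
have -> : (u *m C *m v^T) 0 0 = (u *m C *m v^T)^T 0 0 by rewrite [RHS]mxE.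
by rewrite !trmx_mul trmxK mulmxA.
Qed.


Lemma bfDl n (C : 'M[R]_n) u1 u2 v : bf C (u1 + u2) v = bf C u1 v + bf C u2 v.
Proof. by rewrite /bf !mulmxDl mxE. Qed.
Lemma bfZl n (C : 'M[R]_n) t u v : bf C (t *: u) v = t * bf C u v.
Proof. by rewrite /bf -!scalemxAl mxE. Qed.
Lemma bfDr n (C : 'M[R]_n) u v1 v2 : bf C u (v1 + v2) = bf C u v1 + bf C u v2.
Proof. by rewrite /bf linearD /= mulmxDr mxE. Qed.
Lemma bfZr n (C : 'M[R]_n) t u v : bf C u (t *: v) = t * bf C u v.
Proof. by rewrite /bf linearZ /= -scalemxAr mxE. Qed.

Lemma bf_deltar n (C : 'M[R]_n) u j : bf C u (delta_mx 0 j) = (u *m C) 0 j.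
Proof. by rewrite /bf trmx_delta -colE mxE. Qed.
Lemma bf_delta n (C : 'M[R]_n) i j : bf C (delta_mx 0 i) (delta_mx 0 j) = C i j.
Proof. by rewrite bf_deltar -rowE mxE. Qed.

Lemma bf1 n (u v : 'rV[R]_n) : bf 1%:M u v = \sum_j u 0 j * v 0 j.
Proof. by rewrite /bf mulmx1 mxE; apply: eq_bigr => j _; rewrite mxE. Qed.

Lemma bf1_ge0 n (u : 'rV[R]_n) : 0 <= bf 1%:M u u.
Proof. by rewrite bf1 sumr_ge0 // => j _; rewrite -expr2 sqr_ge0. Qed.

Lemma bf1_eq0 n (u : 'rV[R]_n) : bf 1%:M u u = 0 -> u = 0.
Proof.
rewrite bf1 => /eqP; rewrite psumr_eq0; last by move=> j _; rewrite -expr2 sqr_ge0.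
move=> /allP h; apply/rowP => j; rewrite [RHS]mxE.
by have := h j (mem_index_enum j); rewrite -expr2 sqrf_eq0 => /eqP.
Qed.

Lemma bf_expand n (C : 'M[R]_n) (u v : 'rV[R]_n) t : C^T = C ->
  bf C (u + t *: v) (u + t *: v) = bf C u u + 2 * t * bf C u v + t ^+ 2 * bf C v v.
Proof.
move=> hC; rewrite !bfDl !bfDr !bfZl !bfZr.
rewrite (bf_sym C v u) hC; ring.
Qed.

Lemma quad_zero (a b : R) : (forall t : R, 2 * t * a + t ^+ 2 * b <= 0) -> a = 0.
Proof.
move=> h; set k := 1 + `|b|.
have k0 : 0 < k by rewrite /k ltr_pwDl // normr_ge0.
have := h (a / k).
have e : 2 * (a / k) * a + (a / k) ^+ 2 * b = a ^+ 2 * (2 * k + b) / k ^+ 2.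
  by field; rewrite gt_eqF.
rewrite e pmulr_lle0 ?invr_gt0 ?exprn_gt0 // => h2.
have hb : 0 < 2 * k + b.
  rewrite /k; have := ler_norm (- b); rewrite normrN => hnb.
  have := normr_ge0 b; clear -hnb; lra.
have : a ^+ 2 <= 0 by rewrite -(pmulr_lle0 _ hb).
by move=> hh; apply/eqP; rewrite -sqrf_eq0 eq_le hh sqr_ge0.
Qed.

Lemma sym_largest n (C : 'M[R]_n.+1) : C^T = C ->
  exists g, largest_eigenvalue C g /\ forall i, C i i <= g.
Proof.
move=> hC.
pose q := fun v : 'rV[R]_n.+1 => bf C v v.
pose N := fun v : 'rV[R]_n.+1 => bf 1%:M v v.
pose S := [set v : 'rV[R]_n.+1 | N v = 1].
have S0 : S !=set0.
  by exists (delta_mx 0 0); rewrite /S /= /N bf_delta mxE.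
have Scl : closed S.
  have -> : S = N @^-1` [set x | x = 1] by [].
  apply: preimage_closed; last exact: closed_eq.
  by move=> x _; exact: bf_cont.
have Scp : compact S.
  apply: (subclosed_compact Scl (@rV_compact _ _ (fun=> `[(-1 : R), 1]%classic) (fun=> @segment_compact _ _ _))).
  move=> v Sv i /=; rewrite in_itv /= -ler_norml.
  rewrite -(@ler_pXn2r _ 2) ?nnegrE ?normr_ge0 // expr1n real_normK ?num_real //.
  rewrite -Sv /N bf1 (bigD1 i) //= -expr2 lerDl sumr_ge0 // => j _.
  by rewrite -expr2 sqr_ge0.
have [c Sc cmax] := EVT_max_rV S0 Scp (continuous_subspaceT (@bf_cont _ C)).
have Nc : N c = 1 by move: Sc; rewrite inE.
have Npos : forall v, v != 0 -> 0 < N v.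
  move=> v v0; rewrite lt_def bf1_ge0 andbT; apply/eqP => /bf1_eq0 h.
  by rewrite h eqxx in v0.
have NvC : forall v x, v *m C = x *: v -> q v = x * N v.
  by move=> v x hv; rewrite /q /N /bf hv mulmx1 -scalemxAl mxE.
have qle : forall v, q v <= q c * N v.
  move=> v; have [->|v0] := eqVneq v 0.
    by rewrite /q /N /bf !mul0mx !mxE mulr0.
  have hN := Npos v v0.
  set s := Num.sqrt (N v).
  have s0 : 0 < s by rewrite sqrtr_gt0.
  have ss : s ^+ 2 = N v by rewrite sqr_sqrtr // ltW.
  have Sw : (s^-1 *: v) \in S.
    rewrite inE /S /= /N bfZl bfZr -/(N v) -ss; field; by rewrite gt_eqF.
  have := cmax _ Sw; rewrite /q bfZl bfZr -/(q v) => h.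
  have e : q v = s ^+ 2 * (s^-1 * (s^-1 * q v)) by field; rewrite gt_eqF.
  rewrite e -ss mulrC ler_pM2r ?exprn_gt0 //.
have L : forall y, bf C c y = q c * bf 1%:M c y.
  move=> y; apply/eqP; rewrite -subr_eq0; apply/eqP.
  apply: (@quad_zero _ (q y - q c * N y)) => t.
  have := qle (c + t *: y).
  rewrite /q /N !bf_expand ?trmx1 // -/(N c) Nc -/(q y) -/(N y) => h.
  rewrite -subr_le0 in h.
  apply: le_trans h; rewrite le_eqVlt; apply/orP; left; apply/eqP; ring.
have eig : c *m C = q c *: c.
  apply/rowP => j; rewrite -bf_deltar L bf_deltar mulmx1 mxE //.
have c0 : c != 0.
  by apply/eqP => h; move: Nc; rewrite h /N /bf !mul0mx mxE => /eqP; rewrite eq_sym oner_eq0.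
exists (q c); split; first split.
- by apply/eigenvalueP; exists c.
- move=> x /eigenvalueP [v hv v0].
  have := qle v; rewrite (NvC _ _ hv) ler_pM2r //; exact: Npos.
- move=> i; have := qle (delta_mx 0 i).
  by rewrite /q /N !bf_delta mxE eqxx mulr1.
Qed.
End LinAlg.
Section Poly.
Variable R : realType.
Local Open Scope ereal_scope.

Lemma int_sum (rho : {measure set R -> \bar R}) (s : nat -> R) :
  moment_solution s rho -> forall (c : nat -> R) m,
  rho.-integrable setT (fun x => (\sum_(i < m) c i * x ^+ i)%:E) /\
  \int[rho]_x (\sum_(i < m) c i * x ^+ i)%:E = (\sum_(i < m) c i * s i)%:E.
Proof.
move=> hs c; elim=> [|m [IH1 IH2]].
  under eq_fun do rewrite big_ord0.
  by rewrite big_ord0; split; [exact: integrable0 | exact: integral0].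
under eq_fun do rewrite big_ord_recr /= EFinD EFinM.
have [hi hv] := hs m.
have i2 := integrableZl measurableT (c m) hi.
split; first exact: (integrableD measurableT IH1 i2).
rewrite integralD //= integralZl // IH2 hv big_ord_recr /= EFinD EFinM //.
Qed.

Lemma int_poly (rho : {measure set R -> \bar R}) (s : nat -> R) :
  moment_solution s rho -> forall p : {poly R},
  rho.-integrable setT (fun x => (p.[x])%:E) /\
  \int[rho]_x (p.[x])%:E = (\sum_(i < size p) p`_i * s i)%:E.
Proof.
move=> hs p; under eq_fun do rewrite horner_coef.
exact: (int_sum hs (fun i => p`_i) (size p)).
Qed.

Local Close Scope ereal_scope.

Fixpoint TP (k : nat) : {poly R} :=
  match k with
  | 0 => 0
  | 1 => 1
  | (t.+1 as k').+1 => 'X * TP k' - TP t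
  end.

Lemma TpolySS k (x : R) : Tpoly k.+2 x = x * Tpoly k.+1 x - Tpoly k x.
Proof. by []. Qed.

Lemma TPE k (x : R) : (TP k).[x] = Tpoly k x.
Proof.
suff : (TP k).[x] = Tpoly k x /\ (TP k.+1).[x] = Tpoly k.+1 x by case.
elim: k => [|k [IH1 IH2]]; first by rewrite /= ?hornerC ?horner0 ?horner1.
split=> //; rewrite [TP _]/= [Tpoly k.+2 x]/= hornerD hornerN hornerM hornerX IH1 IH2 //.
Qed.

Lemma Tpoly_ge k (x : R) : 2 <= x -> k%:R <= Tpoly k x /\ Tpoly k x + 1 <= Tpoly k.+1 x.
Proof.
move=> x2; elim: k => [|k [IH1 IH2]]; first by rewrite /= add0r lexx.
have h1 : k.+1%:R <= Tpoly k.+1 x by rewrite -natr1; lra.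
split=> //; rewrite TpolySS.
have h0 : 0 <= Tpoly k.+1 x by apply: le_trans h1; exact: ler0n.
have hx : 0 <= x - 2 by rewrite subr_ge0.
have := mulr_ge0 hx h0; nra.
Qed.

Lemma Tpoly_N k (x : R) : Tpoly k (- x) = (-1) ^+ k.+1 * Tpoly k x.
Proof.
suff : Tpoly k (- x) = (-1) ^+ k.+1 * Tpoly k x /\
   Tpoly k.+1 (- x) = (-1) ^+ k.+2 * Tpoly k.+1 x by case.
elim: k => [|k [IH1 IH2]]; first by rewrite /= mulr0 expr2 mulN1r opprK mulr1.
split=> //; rewrite !TpolySS IH1 IH2 !exprS; ring.
Qed.

Lemma Tpoly_sq k (x : R) : 2 <= `|x| -> k%:R ^+ 2 <= Tpoly k x ^+ 2.
Proof.
have hp : forall y : R, 2 <= y -> k%:R ^+ 2 <= Tpoly k y ^+ 2.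
  move=> y y2; have [h _] := Tpoly_ge k y2.
  by rewrite ler_pXn2r ?nnegrE ?ler0n // (le_trans _ h) ?ler0n.
case: (lerP 0 x) => x0.
  by rewrite ger0_norm // => /hp.
rewrite ltr0_norm // => /hp; rewrite Tpoly_N exprMn -exprM mulnC exprM sqrrN !expr1n mul1r //.
Qed.

Lemma TP2E k : (fun x : R => (Tpoly k x * Tpoly k x)%:E) = (fun x => ((TP k * TP k).[x])%:E).
Proof. by apply: funext => x; rewrite hornerM TPE. Qed.

Lemma rho_setT (rho : {measure set R -> \bar R}) s :
  moment_solution s rho -> rho setT = (s 0%N)%:E.
Proof.
move=> hs; have [_ h] := hs 0%N.
have e : (fun x : R => (x ^+ 0)%:E) = cst 1%:E by apply: funext => x; rewrite expr0.
by rewrite e integral_cst //= mul1e in h.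
Qed.

Lemma rhoD0 (rho : {measure set R -> \bar R}) s (hs : moment_solution s rho)
  (s0 : s 0%N = 1) (M : R)
  (hM : forall k, (0 < k)%N -> Rintegral rho setT (fun x => Tpoly k x * Tpoly k x) <= M) :
  rho (~` `[(-2 : R), 2]%classic) = 0%E.
Proof.
set A := ~` `[(-2 : R), 2]%classic.
have mA : measurable A by apply: measurableC; exact: measurable_itv.
have rT := rho_setT hs; rewrite s0 in rT.
have le1 : (rho A <= 1%:E)%E.
  by rewrite -rT; apply: le_measure => //; rewrite inE.
have ge0 : (0 <= rho A)%E by exact: measure_ge0.
have finA : rho A \is a fin_num by rewrite ge0_fin_numE // (le_lt_trans le1) // ltry.
set r := fine (rho A).
have rE : rho A = r%:E by rewrite /r fineK.
have r0 : 0 <= r by rewrite -lee_fin -rE.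
have key : forall k, (0 < k)%N -> k%:R ^+ 2 * r <= M.
  move=> k k0; apply: le_trans (hM k k0).
  have [hi _] := int_poly hs (TP k * TP k).
  rewrite /Rintegral TP2E -lee_fin fineK; last exact: integrable_fin_num.
  rewrite -TP2E EFinM -rE.
  have mf2 : measurable_fun setT (fun x : R => (Tpoly k x * Tpoly k x)%:E).
    by rewrite TP2E; case/integrableP: hi.
  rewrite -[X in (_ * rho X)%E](setIT A) -integral_indic // -(integralZl_indic _ (fun=> A)) //; last first.
    by move=> h; exfalso; move: h; rewrite ltNge sqr_ge0.
  apply: ge0_le_integral => //.
  - apply/measurable_EFinP; apply: measurable_funM => //; exact: measurable_indic.
  - move=> x _; rewrite lee_fin indicE.
    case: (boolP (x \in A)) => xA; last by rewrite mulr0 -expr2 sqr_ge0.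
    rewrite mulr1 -expr2; apply: Tpoly_sq.
    move: xA; rewrite inE /A /= in_itv /= -ler_norml => /negP; rewrite -ltNge => h.
    exact: ltW.
apply/eqP; rewrite rE eqe; apply/negPn/negP => rne0.
have rpos : 0 < r by rewrite lt_def rne0 r0.
have hb := archi_boundP (divr_ge0 (normr_ge0 M) r0).
set k := (Num.Def.archi_bound (`|M| / r)).+1.
have := key k isT.
have : `|M| < k%:R * r.
  by rewrite -ltr_pdivrMr // (lt_le_trans hb) // ler_nat.
have : k%:R * r <= k%:R ^+ 2 * r.
  rewrite ler_pM2r // expr2 ler_peMl // ?ler0n //.
  by rewrite /k ler1n.
have := ler_norm M.
lra.
Qed.
End Poly.
Section Seq.
Variable R : realType.

Definition gf (y : R) := 3 * y ^+ 2 - 2 * y ^+ 3.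
Definition hf (y : R) := 4 * y * (1 - y).

Lemma gf_range y : 0 <= y <= 1 -> 0 <= gf y <= 1.
Proof.
case/andP=> y0 y1; rewrite /gf; apply/andP; split.
  have : 0 <= y ^+ 2 * (3 - 2 * y) by apply: mulr_ge0; [exact: sqr_ge0|lra].
  by move=> h; apply: le_trans h _; rewrite le_eqVlt; apply/orP; left; apply/eqP; ring.
have : 0 <= (1 - y) ^+ 2 * (1 + 2 * y) by apply: mulr_ge0; [exact: sqr_ge0|lra].
move=> h; rewrite -subr_ge0; apply: le_trans h _; rewrite le_eqVlt; apply/orP; left; apply/eqP; ring.
Qed.

Lemma iter_gf_range N y : 0 <= y <= 1 -> 0 <= iter N gf y <= 1.
Proof. by move=> hy; elim: N => //= N IH; exact: gf_range. Qed.

Lemma iter_gf_sym N y : iter N gf (1 - y) = 1 - iter N gf y.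
Proof. by elim: N => //= N ->; rewrite /gf; ring. Qed.

Lemma iter_gf_half N : iter N gf (2^-1) = 2^-1.
Proof. by elim: N => //= N ->; rewrite /gf; field. Qed.

Lemma iter_gf_lt y : 0 <= y -> y < 2^-1 -> iter N gf y @[N --> \oo] --> 0.
Proof.
move=> y0 yh.
set r := y * (3 - 2 * y).
have r0 : 0 <= r by rewrite /r mulr_ge0 //; lra.
have r1 : r < 1.
  have : 0 < (1 - 2 * y) * (1 - y) by apply: mulr_gt0; lra.
  by rewrite /r => h; nra.
have key : forall N, 0 <= iter N gf y <= r ^+ N * y.
  elim=> [|N /andP [w0 wle]] /=; first by rewrite expr0 mul1r y0 lexx.
  set w := iter N gf y in w0 wle *.
  have rN1 : r ^+ N <= 1 by rewrite exprn_ile1 // ltW.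
  have wy : w <= y by apply: le_trans wle _; rewrite ler_piMl.
  have hw : w * (3 - 2 * w) <= r.
    have : 0 <= (y - w) * (3 - 2 * y - 2 * w) by apply: mulr_ge0; lra.
    by rewrite /r => h; nra.
  have e : gf w = w * (w * (3 - 2 * w)) by rewrite /gf; ring.
  apply/andP; split.
    by rewrite e; apply: mulr_ge0 => //; apply: mulr_ge0 => //; lra.
  rewrite e exprS -mulrA mulrC.
  apply: le_trans (ler_wpM2r w0 hw) _.
  have h2 : 0 <= r ^+ N * y - w by rewrite subr_ge0.
  have := mulr_ge0 r0 h2; nra.
apply: (@squeeze_cvgr _ _ _ _ (fun=> 0) (fun N => r ^+ N * y)).
- by apply: nearW => N; exact: key.
- exact: cvg_cst.
- have hr : `|r| < 1 by rewrite ger0_norm.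
  rewrite -(mul0r y); exact: (cvgM (cvg_expr hr) (cvg_cst y)).
Qed.

Lemma hf_range y : 0 <= y <= 1 -> 0 <= hf y <= 1.
Proof.
case/andP=> y0 y1; rewrite /hf; apply/andP; split.
  by apply: mulr_ge0; [apply: mulr_ge0|]; lra.
have : 0 <= (2 * y - 1) ^+ 2 by exact: sqr_ge0.
by move=> h; rewrite -subr_ge0; apply: le_trans h _; rewrite le_eqVlt; apply/orP; left; apply/eqP; ring.
Qed.

Lemma hf_cvg y : 0 <= y <= 1 -> y != 2^-1 -> hf y ^+ N @[N --> \oo] --> 0.
Proof.
move=> hy yh; apply: cvg_expr.
have /andP [h0 h1] := hf_range hy.
rewrite ger0_norm // lt_def h1 andbT.
apply/negP => /eqP h.
have e : (2 * y - 1) ^+ 2 = 1 - hf y by rewrite /hf; ring.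
rewrite -h subrr in e; move: e; move/eqP; rewrite sqrf_eq0 => /eqP h2.
move: yh; have -> : y = 2^-1 by apply: (@mulfI _ 2); [by []| rewrite divff //; lra].
by rewrite eqxx.
Qed.

Lemma lim_P y : 0 <= y <= 1 ->
  (iter N gf y - 2^-1 * hf y ^+ N) @[N --> \oo] --> (if 2^-1 < y then 1 else 0 : R).
Proof.
move=> hy; case: (eqVneq y (2^-1)) => [->|yh].
  rewrite ltxx.
  have -> : (fun N => iter N gf (2^-1 : R) - 2^-1 * hf (2^-1) ^+ N) = fun=> 0.
    apply: funext => N; rewrite iter_gf_half /hf.
    have -> : 4 * 2^-1 * (1 - 2^-1) = (1 : R) by field.
    by rewrite expr1n mulr1 subrr.
  exact: cvg_cst.
have hh : (2^-1 * hf y ^+ N) @[N --> \oo] --> 0.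
  rewrite -(mulr0 (2^-1 : R)); exact: (cvgM (cvg_cst _) (hf_cvg hy yh)).
case/andP: hy => y0 y1.
case: ltrP => hyh.
  have e : (fun N => iter N gf y) = fun N => 1 - iter N gf (1 - y).
    by apply: funext => N; rewrite iter_gf_sym opprB addrC subrK.
  have h1 : iter N gf (1 - y) @[N --> \oo] --> 0 by apply: iter_gf_lt; lra.
  rewrite -[X in _ --> X](subr0 1) -[X in _ --> X - _](subr0 1).
  apply: (cvgB _ hh).
  rewrite e; exact: (cvgB (cvg_cst _) h1).
have hyl : y < 2^-1 by rewrite lt_neqAle yh hyh.
rewrite -(subr0 0); apply: (cvgB _ hh); exact: iter_gf_lt.
Qed.
End Seq.
Section Meas.
Variable R : realType.
Variable c : R.

Definition LL : R := 4 + 2 * `|c|.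
Definition zf (x : R) : R := (x - c + LL / 2) / LL.
Definition zP : {poly R} := LL^-1 *: ('X - (c - LL / 2)%:P).
Definition gP : {poly R} := 3%:P * 'X^2 - 2%:P * 'X^3.
Definition hP : {poly R} := 4%:P * 'X * (1 - 'X).
Definition GP N := iter N (fun q => gP \Po q) zP.
Definition PN N := GP N - (2^-1)%:P * (hP \Po zP) ^+ N.

Lemma LL_gt0 : 0 < LL.
Proof. rewrite /LL; have := normr_ge0 c; lra. Qed.

Lemma zPE x : zP.[x] = zf x.
Proof.
rewrite /zP /zf hornerZ hornerD hornerN hornerX hornerC.
by field; rewrite gt_eqF // LL_gt0.
Qed.

Lemma gPE y : gP.[y] = gf y.
Proof. by rewrite /gP /gf !hornerE. Qed.

Lemma hPE y : hP.[y] = hf y.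
Proof. by rewrite /hP /hf !hornerE. Qed.

Lemma PNE N x : (PN N).[x] = iter N (@gf R) (zf x) - 2^-1 * hf (zf x) ^+ N.
Proof.
rewrite /PN hornerD hornerN hornerM hornerC horner_exp horner_comp hPE zPE.
congr (_ - _); elim: N => [|N IH]; first by rewrite /GP /= zPE.
by rewrite /GP iterS -/(GP N) horner_comp gPE IH.
Qed.

Lemma zf_range x : -2 <= x <= 2 -> 0 <= zf x <= 1.
Proof.
move=> /andP [x1 x2]; have L0 := LL_gt0.
have hc := ler_norm c; have hc' := ler_norm (- c); rewrite normrN in hc'.
rewrite /zf; apply/andP; split.
  apply: divr_ge0; last exact: ltW.
  rewrite /LL; lra.
rewrite ler_pdivrMr // mul1r /LL; lra.
Qed.

Lemma zf_half x : (2^-1 < zf x) = (c < x).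
Proof.
have L0 := LL_gt0.
rewrite /zf ltr_pdivlMr //.
apply/idP/idP => h.
  have : 0 < x - c by lra.
  by rewrite subr_gt0.
lra.
Qed.

Definition DD : set R := `[(-2 : R), 2]%classic.

Lemma poly_meas (rho : {measure set R -> \bar R}) s (hs : moment_solution s rho) (p : {poly R}) :
  measurable_fun setT (fun x => p.[x]).
Proof.
have [hi _] := int_poly hs p.
by case/integrableP: hi => /measurable_EFinP.
Qed.

Lemma dc_lim (rho : {measure set R -> \bar R}) s (hs : moment_solution s rho)
  (hD : rho (~` DD) = 0%E) :
  (\int[rho]_x ((PN N).[x])%:E)%E @[N --> \oo] --> rho `]c, +oo[%classic.
Proof.
pose f_ := fun N x => ((PN N).[x] * \1_DD x)%:E.
pose f := fun x : R => ((\1_(DD `&` `]c, +oo[%classic) x : R))%:E.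
have mDD : measurable DD by exact: measurable_itv.
have mI : measurable (DD `&` `]c, +oo[%classic) by apply: measurableI => //; exact: measurable_itv.
have mf_ : forall N, measurable_fun setT (f_ N).
  move=> N; apply/measurable_EFinP; apply: measurable_funM.
    exact: (poly_meas hs).
  exact: measurable_indic.
have mf : measurable_fun setT f by apply/measurable_EFinP; exact: measurable_indic.
have ig : rho.-integrable setT (cst 2%:E).
  have [hi _] := int_poly hs 2%:P.
  by move: hi; under eq_fun do rewrite hornerC.
have f_f : \forall x \ae rho, setT x -> f_ ^~ x @ \oo --> f x.
  apply: aeW => x _.
  rewrite /f_ /f !indicE.
  case: (boolP (x \in DD)) => xD.
    have hx : -2 <= x <= 2 by move: xD; rewrite inE /DD /= in_itv.
    have -> : (x \in DD `&` `]c, +oo[%classic) = (2^-1 < zf x).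
      rewrite zf_half; apply/idP/idP.
        by rewrite inE => -[_]; rewrite /= in_itv /= andbT.
      by move=> h; rewrite inE; split; [move: xD; rewrite inE | rewrite /= in_itv /= h].
    apply: cvg_EFin; first by apply: nearW.
    under eq_fun do rewrite /= mulr1 PNE.
    have := lim_P (zf_range hx).
    by case: ifP.
  have -> : (x \in DD `&` `]c, +oo[%classic) = false.
    by apply/negbTE; apply: contra xD; rewrite !inE => -[].
  under eq_fun do rewrite mulr0.
  exact: cvg_cst.
have f_g : \forall x \ae rho, forall N, setT x -> (`|f_ N x| <= cst 2%:E x)%E.
  apply: aeW => x N _; rewrite /f_ /= lee_fin indicE.
  case: (boolP (x \in DD)) => xD; last by rewrite mulr0 normr0.
  have hx : -2 <= x <= 2 by move: xD; rewrite inE /DD /= in_itv.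
  rewrite mulr1 PNE.
  have /andP [g0 g1] := iter_gf_range N (zf_range hx).
  have /andP [h0 h1] := hf_range (zf_range hx).
  have hN0 : 0 <= hf (zf x) ^+ N by exact: exprn_ge0.
  have hN1 : hf (zf x) ^+ N <= 1 by exact: exprn_ile1.
  apply: le_trans (ler_normB _ _) _.
  rewrite normrM !ger0_norm //; lra.
have [_ _ conv] := dominated_convergence measurableT mf_ mf f_f ig f_g.
have e1 : (fun N => \int[rho]_x ((PN N).[x])%:E)%E = (fun N => \int[rho]_x f_ N x)%E.
  apply: funext => N; apply: ae_eq_integral => //.
  - by apply/measurable_EFinP; exact: (poly_meas hs).
  - exists (~` DD); split => //; first exact: measurableC.
    move=> x /= hx xD; apply: hx => _.
    by rewrite /f_ indicE; move/mem_set: xD => ->; rewrite mulr1.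
have e2 : (\int[rho]_x f x)%E = rho (DD `&` `]c, +oo[%classic).
  by rewrite integral_indic // setIT.
rewrite e1; rewrite e2 in conv.
have gen : forall A : set R, measurable A -> rho A = rho (DD `&` A).
  move=> A mA; rewrite (measureDI rho mA mDD) setIC.
  rewrite [X in (X + _)%E](_ : _ = 0%E).
    by rewrite add0e.
    apply/eqP; rewrite eq_le measure_ge0 andbT -hD.
    by apply: le_measure; rewrite ?inE //; [exact: measurableD | exact: measurableC].
rewrite (gen `]c, +oo[%classic); last exact: measurable_itv.
exact: conv.
Qed.
End Meas.

Section Final.
Variable R : realType.

Lemma itv_eq (rho1 rho2 : {measure set R -> \bar R}) s
  (hs1 : moment_solution s rho1) (hs2 : moment_solution s rho2)
  (hD1 : rho1 (~` @DD R) = 0%E) (hD2 : rho2 (~` @DD R) = 0%E) (c : R) :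
  rho1 `]c, +oo[%classic = rho2 `]c, +oo[%classic.
Proof.
have h1 := dc_lim hs1 hD1 (c := c).
have h2 := dc_lim hs2 hD2 (c := c).
have e : (fun N => \int[rho1]_x ((PN c N).[x])%:E)%E = (fun N => \int[rho2]_x ((PN c N).[x])%:E)%E.
  apply: funext => N.
  by have [_ ->] := int_poly hs1 (PN c N); have [_ ->] := int_poly hs2 (PN c N).
rewrite e in h1.
by rewrite -(cvg_lim (@ereal_hausdorff R) h1) -(cvg_lim (@ereal_hausdorff R) h2).
Qed.

Lemma mGR : (@measurable _ R) = <<s @RGenOInfty.G R >>.
Proof. exact: RGenOInfty.measurableE. Qed.

Lemma det_of (rho1 rho2 : {measure set R -> \bar R}) s
  (hs1 : moment_solution s rho1) (hs2 : moment_solution s rho2) (s0 : s 0%N = 1)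
  (hD1 : rho1 (~` @DD R) = 0%E) (hD2 : rho2 (~` @DD R) = 0%E) :
  forall A : set R, measurable A -> rho1 A = rho2 A.
Proof.
apply: (measure_unique (@RGenOInfty.G R) (fun k => `](- k%:R), +oo[%classic) mGR).
- move=> _ _ [x ->] [y ->]; exists (Num.max x y).
  apply/seteqP; split => t /=; rewrite !in_itv /= !andbT.
    by case => h1 h2; rewrite gt_max h1 h2.
  by rewrite gt_max => /andP [h1 h2]; split.
- by move=> k; exists (- k%:R).
- apply/seteqP; split => // t _.
  exists (Num.Def.archi_bound `|t|) => //=.
  rewrite in_itv /= andbT.
  have h := archi_boundP (normr_ge0 t).
  have := ler_norm (- t); rewrite normrN; lra.
- by move=> _ [x ->]; exact: itv_eq.
- move=> k; apply: (@le_lt_trans _ _ (rho1 setT)).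
    by apply: le_measure; rewrite ?inE //; exact: measurable_itv.
  by rewrite (rho_setT hs1) s0 ltry.
Qed.
End Final.

Unset Implicit Arguments.
Theorem mainTheorem2 (R : realType) (a b : nat -> R)
  (ha0 : a 0%N = 1) (hapos : forall n : nat, (0 < n)%N -> 0 < a n)
  (hbound : exists M : R, forall rho : {measure set R -> \bar R},
      moment_solution (moment a b) rho ->
      forall (T : nat) (g : R), (0 < T)%N -> largest_eigenvalue (CT rho T) g -> g <= M) :
  determinate (moment a b).
Proof.
case: hbound => M hM.
have s0 : moment a b 0%N = 1 by [].
have hD : forall rho : {measure set R -> \bar R}, moment_solution (moment a b) rho ->
    rho (~` @DD R) = 0%E.
  move=> rho hs; apply: (rhoD0 hs s0 (M := M)) => k; case: k => // n _.
  have hC : (CT rho n.+1)^T = CT rho n.+1.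
    apply/matrixP => i j; rewrite !mxE.
    by congr Rintegral; apply: funext => x; rewrite mulrC.
  have [g [lg hd]] := sym_largest hC.
  apply: le_trans (hM rho hs n.+1 g isT lg).
  by have := hd ord_max; rewrite mxE.
move=> rho1 rho2 hs1 hs2.
exact: (det_of hs1 hs2 s0 (hD _ hs1) (hD _ hs2)).
Qed.
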